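(* Let $n\ge 2$ and let $f:\{0,1\}^n\to\{0,1\}^{n-1}$ be a function that eliminates one bit, i.e. there is $k\in\{0,\dots,n-1\}$ such that $f(x_{n-1}\dots x_{k+1}x_kx_{k-1}\dots x_0)=x_{n-1}\dots x_{k+1}x_{k-1}\dots x_0$ for all inputs. For $i=0,\dots,n-2$, run the algorithm $\mathrm{GPK}(\mathbf{e}_i)$ (with $m=n-1$), where $\mathbf{e}_i\in\{0,1\}^{n-1}$ is the string with a single $1$ in position $i$. Then each run outputs, with certainty, a string of the form $\mathbf{e}'_j\in\{0,1\}^n$ (the string of length $n$ with a single $1$ in position $j$), the $n-1$ outputs are distinct, and the unique $j\in\{0,\dots,n-1\}$ such that $\mathbf{e}'_j$ is not among the outputs is $j=k$, the eliminated bit. Hence the eliminated bit is determined by these $n-1$ runs.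
   Context: Bits of a string $\mathbf{x}=x_{n-1}\dots x_1x_0$ are indexed from the right starting at $0$; the string with a single $1$ in position $i$ is $0^{\,\ell-1-i}\,1\,0^{\,i}$ (of length $\ell$). For strings $\mathbf{y},\mathbf{z}$ of equal length, $\mathbf{y}\oplus\mathbf{z}$ is bitwise XOR and $\mathbf{y}\cdot\mathbf{z}=\bigoplus_j y_jz_j$. For $f:\{0,1\}^n\to\{0,1\}^m$, $\mathbf{U}_f$ is the unitary with $\mathbf{U}_f(\ket{\mathbf{x}}_n\otimes\ket{\mathbf{z}}_m)=\ket{\mathbf{x}}_n\otimes\ket{\mathbf{z}\oplus f(\mathbf{x})}_m$; $\mathbf{H}_k=\mathbf{H}^{\otimes k}$ with $\mathbf{H}$ the one-qubit Hadamard gate. The algorithm $\mathrm{GPK}(\mathbf{y})$ for a marker $\mathbf{y}\in\{0,1\}^m$: start in $\ket{\mathbf{0}}_n\otimes\ket{\mathbf{0}}_m$; apply Pauli $\mathbf{X}$ gates to the second register to obtain $\ket{\mathbf{0}}_n\otimes\ket{\mathbf{y}}_m$; apply $\mathbf{H}_{n+m}$ to all qubits; apply $\mathbf{U}_f$; apply $\mathbf{H}_n$ to the first register; measure the first register in the computational basis, obtaining an output $\delta\in\{0,1\}^n$. *)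

(* Defs.v *)
From mathcomp Require Import all_boot all_order all_algebra.
From mathcomp Require Import algC.
Set Implicit Arguments. Unset Strict Implicit. Unset Printing Implicit Defensive.
Import Order.TTheory GRing.Theory Num.Theory.
Local Open Scope ring_scope.

(* A bit string x_{n-1}...x_0 of length n: (x : bits n) i = x_i. *)
Definition bits (n : nat) := {ffun 'I_n -> bool}.

Definition bxor n (y z : bits n) : bits n := [ffun i => y i (+) z i].
Definition zero_bits n : bits n := [ffun => false].
Definition ebit n (i : 'I_n) : bits n := [ffun j => j == i].

Definition elim_bit n (k : 'I_n) (x : bits n) : bits n.-1 :=
  [ffun i => x (lift k i)].

(* states of an (n+m)-qubit system: amplitude of |x>_n (x) |z>_m *)
Definition state n m := bits n -> bits m -> algC.

Definition hadamard (b c : bool) : algC := (-1) ^+ (b && c) / sqrtC 2.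
Definition hadamardk k (b c : bits k) : algC := \prod_(j < k) hadamard (b j) (c j).

Definition init_state n m : state n m :=
  fun x z => if (x == zero_bits n) && (z == zero_bits m) then 1 else 0.

(* Pauli X on each qubit i of the second register with y_i = 1: |x,z> |-> |x, z xor y> *)
Definition applyX2 n m (y : bits m) (psi : state n m) : state n m :=
  fun x w => \sum_(z : bits m) (if w == bxor z y then psi x z else 0).

Definition applyHall n m (psi : state n m) : state n m :=
  fun x z => \sum_(x' : bits n) \sum_(z' : bits m)
               hadamardk x x' * hadamardk z z' * psi x' z'.

Definition applyUf n m (f : bits n -> bits m) (psi : state n m) : state n m :=
  fun x w => \sum_(z : bits m) (if w == bxor z (f x) then psi x z else 0).

Definition applyH1 n m (psi : state n m) : state n m :=
  fun x z => \sum_(x' : bits n) hadamardk x x' * psi x' z.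

Definition GPK_state n m (f : bits n -> bits m) (y : bits m) : state n m :=
  applyH1 (applyUf f (applyHall (applyX2 y (@init_state n m)))).

Definition GPK_prob n m (f : bits n -> bits m) (y : bits m) (delta : bits n) : algC :=
  \sum_(z : bits m) `|GPK_state f y delta z| ^+ 2.

(* Main.v *)
Require Import Defs.
From mathcomp Require Import all_boot all_order all_algebra.
From mathcomp Require Import algC.
From mathcomp Require Import ring.
Import Order.TTheory GRing.Theory Num.Theory.
Local Open Scope ring_scope.

Definition hh : algC := (sqrtC 2)^-1.

Lemma sum_delta (T : finType) (j : T) (F : T -> algC) :
  \sum_(i : T) (if i == j then F i else 0) = F j.
Proof.
by rewrite (bigD1 j) //= eqxx big1 ?addr0 // => i /negbTE ->.
Qed.

Lemma eq_bxor m (w z y : bits m) : (w == bxor z y) = (z == bxor w y).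
Proof.
apply/eqP/eqP => -> ; apply/ffunP => t; rewrite !ffunE;
  by case: (z t); case: (y t); case: (w t).
Qed.

Lemma sumX m (y w : bits m) (F : bits m -> algC) :
  \sum_z (if w == bxor z y then F z else 0) = F (bxor w y).
Proof.
rewrite (eq_bigr (fun z => if z == bxor w y then F z else 0)).
  exact: sum_delta.
by move=> z _; rewrite eq_bxor.
Qed.

Lemma bxor0 m (w y : bits m) : (bxor w y == zero_bits m) = (w == y).
Proof.
apply/eqP/eqP => [H|->].
  apply/ffunP => t; move/ffunP: H => /(_ t); rewrite !ffunE.
  by case: (w t); case: (y t).
by apply/ffunP => t; rewrite !ffunE; case: (y t).
Qed.

Lemma X2_init n m (y : bits m) x w :
  applyX2 y (@init_state n m) x w =
  if (x == zero_bits n) && (w == y) then 1 else 0.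
Proof. by rewrite /applyX2 sumX /init_state bxor0. Qed.

Lemma Hall_X2 n m (y : bits m) x z :
  applyHall (applyX2 y (@init_state n m)) x z =
  hadamardk x (zero_bits n) * hadamardk z y.
Proof.
rewrite /applyHall (bigD1 (zero_bits n)) //= [X in _ + X]big1 ?addr0.
  rewrite (bigD1 y) //= X2_init !eqxx /= mulr1 big1 ?addr0 //.
  by move=> z' /negbTE Hz; rewrite X2_init Hz andbF mulr0.
move=> x' /negbTE Hx; apply: big1 => z' _.
by rewrite X2_init Hx /= mulr0.
Qed.

Lemma prod_sign k (i : 'I_k) (g : 'I_k -> bool) (e : 'I_k -> bool)
  (he : forall j, e j = (j == i)) :
  \prod_(j < k) hadamard (g j) (e j) = (-1) ^+ (g i) * hh ^+ k.
Proof.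
rewrite /hadamard big_split /= prodr_const card_ord (bigD1 i) //= he eqxx andbT.
rewrite big1 ?mulr1 // => j /negbTE Hj; by rewrite he Hj andbF.
Qed.

Lemma prod_sign' k (i : 'I_k) (g : 'I_k -> bool) (e : 'I_k -> bool)
  (he : forall j, e j = (j == i)) :
  \prod_(j < k) hadamard (e j) (g j) = (-1) ^+ (g i) * hh ^+ k.
Proof.
rewrite -(prod_sign _ _ g _ he); apply: eq_bigr => j _.
by rewrite /hadamard andbC.
Qed.

Lemma hadk0 k (x : bits k) : hadamardk x (zero_bits k) = hh ^+ k.
Proof.
rewrite /hadamardk /hadamard (eq_bigr (fun _ => hh)) ?prodr_const ?card_ord //.
by move=> j _; rewrite ffunE andbF expr0 mul1r.
Qed.

Lemma hh2 : hh * hh = 2^-1.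
Proof. by rewrite /hh -invfM -expr2 sqrtCK. Qed.

Lemma hhpow k : (hh ^+ k * hh ^+ k) *+ (2 ^ k) = 1.
Proof.
rewrite -exprMn hh2 -mulr_natr natrX -exprMn mulVf ?expr1n //.
by rewrite pnatr_eq0.
Qed.

Lemma card_bits k : #|bits k| = (2 ^ k)%N.
Proof. by rewrite card_ffun card_bool card_ord. Qed.

Lemma state_val n (k : 'I_n) (f : bits n -> bits n.-1)
  (hf : forall x, f x = elim_bit k x) (i : 'I_n.-1) w :
  GPK_state f (ebit i) (ebit (lift k i)) w = (-1) ^+ (w i) * hh ^+ n.-1.
Proof.
rewrite /GPK_state /applyH1.
rewrite (eq_bigr (fun _ => hh ^+ n * hh ^+ n * ((-1) ^+ (w i) * hh ^+ n.-1))).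
  rewrite sumr_const card_bits -mulrnAl hhpow mul1r //.
move=> x' _.
rewrite /applyUf sumX Hall_X2 hadk0.
rewrite /hadamardk (prod_sign' _ (lift k i)); last by move=> j; rewrite ffunE.
rewrite (prod_sign _ i); last by move=> j; rewrite ffunE.
rewrite !ffunE hf ffunE signr_addb.
set s := (-1) ^+ x' (lift k i).
transitivity (s * s * (hh ^+ n * hh ^+ n * ((-1) ^+ w i * hh ^+ n.-1))); first ring.
by rewrite /s -mulrA signrMK.
Qed.

Lemma hh_ge0 : 0 <= hh.
Proof. by rewrite /hh invr_ge0 sqrtC_ge0. Qed.

Lemma prob1 n (k : 'I_n) (f : bits n -> bits n.-1)
  (hf : forall x, f x = elim_bit k x) (i : 'I_n.-1) :
  GPK_prob f (ebit i) (ebit (lift k i)) = 1.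
Proof.
rewrite /GPK_prob.
rewrite (eq_bigr (fun _ => hh ^+ n.-1 * hh ^+ n.-1)).
  by rewrite sumr_const card_bits hhpow.
move=> w _; rewrite (state_val _ _ _ hf) normrMsign ger0_norm; last exact: exprn_ge0 hh_ge0.
by rewrite expr2.
Qed.

Lemma miss n (k : 'I_n) (j : 'I_n) : (forall i, lift k i != j) <-> j = k.
Proof.
split.
  move=> H; case: (eqVneq k j) => [->//|/unlift_some [i' Hj _]].
  by move: (H i'); rewrite Hj eqxx.
by move=> -> i; rewrite eq_sym neq_lift.
Qed.

Theorem lemma2p2 (n : nat) (hn : (2 <= n)%N) (k : 'I_n)
    (f : bits n -> bits n.-1) (hf : forall x, f x = elim_bit k x) :
  exists out : 'I_n.-1 -> 'I_n,
    [/\ forall i : 'I_n.-1, GPK_prob f (ebit i) (ebit (out i)) = 1,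
        injective out &
        forall j : 'I_n, (forall i, out i != j) <-> j = k].
Proof.
exists (lift k); split.
- exact: prob1.
- exact: lift_inj.
- exact: miss.
Qed.
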